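(* The generalized $\mathbb Z^d$ beach model satisfies condition $\mho$. That is: let $A=A_0\uplus A_1$ and $B$ be finite sets with $A_0\neq\emptyset$, let $S=A\times B$, write $s=(\alpha(s),\beta(s))$, and let $X=\{x\in S^{\mathbb Z^d}:\forall n\in\mathbb Z^d,\ 1\le i\le d,\ (\alpha(x_n)\in A_0\text{ and }\alpha(x_{n+e_i})\in A_0)\text{ or }\beta(x_n)=\beta(x_{n+e_i})\}$. Then there is a finite $F\subset\mathbb Z^d$ such that for every $a\in X_F$ the subgroup of $\mathbb Z^S$ generated by $\{\Psi_\sharp(a,b):b\in X_F,\ a_{\partial F}=b_{\partial F}\}$ equals $\mathbb H_{X,\sharp}$.
   Context: $e_1,\dots,e_d$ are the standard unit vectors of $\mathbb Z^d$. Notation: $\|n\|=\max_k|n_k|$, $B(n,r)=\{k:\|k-n\|\le r\}$, $F^o=\{x\in F:B(x,1)\subset F\}$, $\partial F=F\setminus F^o$; $x_\Lambda$ restriction, $X_\Lambda=\{x_\Lambda:x\in X\}$. Tail relation $\mathfrak T(X)=\{(x,y)\in X^2:\exists F\text{ finite},x_{F^c}=y_{F^c}\}$. $\sharp:S\to\mathbb Z^S$, $\sharp(s)=e_s$ (standard basis vector of $\mathbb Z^S$); $\Psi_\sharp(x,y)=\sum_j(e_{y_j}-e_{x_j})$ on $\mathfrak T(X)$; for finite $F$ and $a,b\in X_F$, $\Psi_\sharp(a,b)=\sum_{j\in F}(e_{b_j}-e_{a_j})$; $\mathbb H_{X,\sharp}$ is the subgroup generated by $\{\Psi_\sharp(x,y):(x,y)\in\mathfrak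 T(X)\}$. *)

(* Defs.v *)
From HB Require Import structures.
From mathcomp Require Import all_boot all_order all_algebra.
From mathcomp Require Import finmap.
Set Implicit Arguments. Unset Strict Implicit. Unset Printing Implicit Defensive.
Import Order.TTheory GRing.Theory Num.Theory.
Local Open Scope ring_scope.
Local Open Scope fset_scope.

Definition point (d : nat) := {ffun 'I_d -> int}.

Definition unitv (d : nat) (i : 'I_d) : point d := [ffun j => ((j == i) : nat)%:Z].

Definition in_ball1 (d : nat) (n k : point d) : Prop :=
  forall j : 'I_d, `|k j - n j| <= 1.

Definition interior_pt (d : nat) (F : {fset point d}) (n : point d) : Prop :=
  n \in F /\ (forall k, in_ball1 n k -> k \in F).
Definition boundary_pt (d : nat) (F : {fset point d}) (n : point d) : Prop :=
  n \in F /\ ~ interior_pt F n.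

Definition alph (A0 A1 B : finType) : finType := ((A0 + A1)%type * B)%type.

Definition in_beach (d : nat) (A0 A1 B : finType) (x : point d -> alph A0 A1 B) : Prop :=
  forall (n : point d) (i : 'I_d),
    (is_inl (x n).1 /\ is_inl (x (n + unitv i)%R).1) \/ (x n).2 = (x (n + unitv i)%R).2.

Definition sharp (S : finType) (s : S) : {ffun S -> int} := [ffun t => ((t == s) : nat)%:Z].

Definition PsiD (d : nat) (S : finType) (D : {fset point d}) (x y : point d -> S) : {ffun S -> int} :=
  \sum_(j <- D) (sharp (y j) - sharp (x j)).

Definition gen_subgroup (M : zmodType) (P : M -> Prop) (v : M) : Prop :=
  exists (n : nat) (g : 'I_n -> M) (c : 'I_n -> int),
    (forall i, P (g i)) /\ v = \sum_(i < n) g i *~ c i.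

(* generators of H_{X,sharp}: Psi(x,y) for (x,y) in the tail relation of X;
   PsiD D x y equals Psi(x,y) for any finite D outside which x,y agree *)
Definition H_gens (d : nat) (A0 A1 B : finType) (w : {ffun alph A0 A1 B -> int}) : Prop :=
  exists (x y : point d -> alph A0 A1 B) (D : {fset point d}),
    in_beach x /\ in_beach y /\ (forall n, n \notin D -> x n = y n) /\ w = PsiD D x y.

(* Main.v *)
Require Import Defs.
From HB Require Import structures.
From mathcomp Require Import all_boot all_order all_algebra.
From mathcomp Require Import finmap.
From mathcomp Require Import zify.
Import Order.TTheory GRing.Theory Num.Theory.
Local Open Scope ring_scope.

Lemma gen0 (M : zmodType) (P : M -> Prop) : gen_subgroup P 0.
Proof.
exists 0%N, (fun _ => 0), (fun _ => 0); split; first by case.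
by rewrite big_ord0.
Qed.

Lemma gen1 (M : zmodType) (P : M -> Prop) u : P u -> gen_subgroup P u.
Proof.
move=> Pu; exists 1%N, (fun _ => u), (fun _ => 1); split => //.
by rewrite big_ord1.
Qed.

Lemma genD (M : zmodType) (P : M -> Prop) u v :
  gen_subgroup P u -> gen_subgroup P v -> gen_subgroup P (u + v).
Proof.
move=> [n1 [g1 [c1 [P1 ->]]]] [n2 [g2 [c2 [P2 ->]]]].
exists (n1 + n2)%N, (fun i => match split i with inl a => g1 a | inr b => g2 b end),
  (fun i => match split i with inl a => c1 a | inr b => c2 b end); split.
  by move=> i; case: (split i).
rewrite big_split_ord /=. congr (_ + _); apply: eq_bigr => i _.
  by rewrite (unsplitK (inl i : 'I_n1 + 'I_n2)).
by rewrite (unsplitK (inr i : 'I_n1 + 'I_n2)).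
Qed.

Lemma genZ (M : zmodType) (P : M -> Prop) u z :
  gen_subgroup P u -> gen_subgroup P (u *~ z).
Proof.
move=> [n [g [c [Pg ->]]]].
exists n, g, (fun i => c i * z); split => //.
by rewrite mulrz_suml; apply: eq_bigr => i _; rewrite mulrzA.
Qed.

Lemma genB (M : zmodType) (P : M -> Prop) u v :
  gen_subgroup P u -> gen_subgroup P v -> gen_subgroup P (u - v).
Proof.
move=> hu hv; apply: genD => //.
by rewrite -mulrN1z; apply: genZ.
Qed.

Lemma gen_sum (M : zmodType) (P : M -> Prop) (I : Type) (r : seq I) (f : I -> M) :
  (forall i, gen_subgroup P (f i)) -> gen_subgroup P (\sum_(i <- r) f i).
Proof.
move=> h; elim: r => [|a r IH]; first by rewrite big_nil; apply: gen0.
by rewrite big_cons; apply: genD.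
Qed.

Definition tot {S : finType} (v : {ffun S -> int}) : int := \sum_s v s.

Lemma totD (S : finType) (u v : {ffun S -> int}) : tot (u + v) = tot u + tot v.
Proof. by rewrite /tot -big_split; apply: eq_bigr => s _; rewrite ffunE. Qed.

Lemma tot0 (S : finType) : tot (0 : {ffun S -> int}) = 0.
Proof. by rewrite /tot big1 // => s _; rewrite ffunE. Qed.

Lemma totB (S : finType) (u v : {ffun S -> int}) : tot (u - v) = tot u - tot v.
Proof.
rewrite /tot -sumrB; apply: eq_bigr => s _; by rewrite !ffunE.
Qed.

Lemma totZ (S : finType) (u : {ffun S -> int}) z : tot (u *~ z) = tot u *~ z.
Proof. by rewrite /tot mulrz_suml; apply: eq_bigr => s _; rewrite ffunMzE. Qed.

Lemma tot_sharp (S : finType) (a : S) : tot (sharp a) = 1.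
Proof.
rewrite /tot (bigD1 a) //= big1 ?addr0; first by rewrite ffunE eqxx.
by move=> s /negbTE h; rewrite ffunE h.
Qed.

Lemma tot_sum (S : finType) (I : Type) (r : seq I) (f : I -> {ffun S -> int}) :
  tot (\sum_(i <- r) f i) = \sum_(i <- r) tot (f i).
Proof.
elim: r => [|a r IH]; first by rewrite !big_nil tot0.
by rewrite !big_cons totD IH.
Qed.

Lemma tot_PsiD d (S : finType) (D : {fset point d}) (x y : point d -> S) :
  tot (PsiD D x y) = 0.
Proof.
rewrite /PsiD tot_sum big1 // => j _.
by rewrite totB !tot_sharp subrr.
Qed.

Lemma gen_tot (S : finType) (P : {ffun S -> int} -> Prop) v :
  (forall w, P w -> tot w = 0) -> gen_subgroup P v -> tot v = 0.
Proof.
move=> hP [n [g [c [Pg ->]]]].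
rewrite tot_sum big1 // => i _.
by rewrite totZ hP // mul0rz.
Qed.

Lemma tot_gen (S : finType) (P : {ffun S -> int} -> Prop) v :
  (forall p q, gen_subgroup P (sharp p - sharp q)) -> tot v = 0 -> gen_subgroup P v.
Proof.
move=> hD ht.
case: (pickP (@predT S)) => [t0 _|hS]; last first.
  have -> : v = 0 by apply/ffunP => s; have := hS s.
  exact: gen0.
have -> : v = \sum_s (sharp s - sharp t0) *~ v s.
  apply/ffunP => t; rewrite sum_ffunE.
  under eq_bigr => s _ do rewrite ffunMzE !ffunE mulrzz mulrBl.
  rewrite sumrB (bigD1 t) //= eqxx mul1r big1 => [|s /negbTE h]; last first.
    by rewrite eq_sym h mul0r.
  by rewrite addr0 -mulr_sumr; move: ht; rewrite /tot => ->; rewrite mulr0 subr0.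
apply: gen_sum => s; apply: genZ; exact: hD.
Qed.

Definition Lv {d} (r : int) (k : point d) : bool := [forall j, `|k j| <= r].

Lemma unitvE d (n : point d) i j : (n + unitv i) j = n j + ((j == i) : nat)%:Z.
Proof. by rewrite !ffunE. Qed.

Lemma Lv_nbr d r (n : point d) i : Lv r n -> Lv (r + 1) (n + unitv i).
Proof.
move/forallP=> h; apply/forallP=> j; rewrite unitvE; have := h j.
case: (j == i) => /=; lia.
Qed.

Lemma Lv_nbr' d r (n : point d) i : Lv r (n + unitv i) -> Lv (r + 1) n.
Proof.
move/forallP=> h; apply/forallP=> j; have := h j; rewrite unitvE.
case: (j == i) => /=; lia.
Qed.

Lemma Lv_mono d r (n : point d) : Lv r n -> Lv (r + 1) n.
Proof. by move/forallP=> h; apply/forallP=> j; have := h j; lia. Qed.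

Lemma Lv00 d (n : point d) i : Lv 0 n -> Lv 0 (n + unitv i) -> False.
Proof.
move=> /forallP h1 /forallP h2; have := h1 i; have := h2 i.
rewrite unitvE eqxx /=; lia.
Qed.

Lemma Lv0 d (n : point d) : Lv 0 n -> n = 0.
Proof.
move/forallP=> h; apply/ffunP=> j; have := h j; rewrite ffunE => hh; apply/eqP; by rewrite -normr_le0.
Qed.

Lemma Lv_zero d r : 0 <= r -> Lv r (0 : point d).
Proof. by move=> hr; apply/forallP => j; rewrite ffunE normr0. Qed.

Arguments Lv_nbr {d r n} i.
Arguments Lv_nbr' {d} r {n i}.
Arguments Lv_mono {d r n}.
Arguments Lv0 {d n}.
Arguments Lv_zero {d r}.

Definition Fbox d : {fset point d} :=
  seq_fset tt (map (fun f : {ffun 'I_d -> 'I_7} => [ffun j => (f j : nat)%:Z - 3] : point d)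
                   (enum {ffun 'I_d -> 'I_7})).

Lemma Fbox_in d (k : point d) : Lv 3 k -> k \in Fbox d.
Proof.
move/forallP=> h; rewrite seq_fsetE; apply/mapP.
exists [ffun j => inord (absz (k j + 3))]; first by rewrite mem_enum.
apply/ffunP => j; rewrite !ffunE inordK; have := h j; move: (k j) => z; lia.
Qed.

Definition valid {A0 A1 B : finType} (p : alph A0 A1 B) (b : B) : bool :=
  is_inl p.1 || (p.2 == b).

Definition wcfg {d} {A0 A1 B : finType} (x : point d -> alph A0 A1 B) (a0 : A0)
  (p : alph A0 A1 B) (b : B) (k : point d) : alph A0 A1 B :=
  if Lv 0 k then p else if Lv 1 k then (inl a0, b)
  else if Lv 2 k then (inl a0, (x k).2) else x k.

Lemma w_beach d (A0 A1 B : finType) (x : point d -> alph A0 A1 B) a0 p b :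
  in_beach x -> valid p b -> in_beach (wcfg x a0 p b).
Proof.
move=> hx hv n i; have hxn := hx n i; rewrite /wcfg.
set m := (n + unitv i)%R in hxn *.
have n01 : Lv 0 n -> Lv 1 m by move=> /(Lv_nbr i).
have m01 : Lv 0 m -> Lv 1 n by move=> /(@Lv_nbr' _ 0).
have n12 : Lv 1 n -> Lv 2 m by move=> /(Lv_nbr i).
have m12 : Lv 1 m -> Lv 2 n by move=> /(@Lv_nbr' _ 1).
have nn : Lv 0 n -> Lv 0 m -> False by apply: Lv00.
have mon0 : forall k : point d, Lv 0 k -> Lv 1 k by move=> k /Lv_mono.
have mon1 : forall k : point d, Lv 1 k -> Lv 2 k by move=> k /Lv_mono.
case: (boolP (Lv 0 n)) => c0n.
  have c1m := n01 c0n.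
  have nc0m : Lv 0 m = false by apply/negbTE/negP => /(nn c0n).
  rewrite nc0m c1m /=.
  by case/orP: hv => [h|/eqP h]; [left | right].
case: (boolP (Lv 0 m)) => c0m.
  rewrite (m01 c0m) /=.
  by case/orP: hv => [h|/eqP h]; [left | right].
case: (boolP (Lv 1 n)) => c1n.
  rewrite (n12 c1n) /=; left; split => //.
  by case: (Lv 1 m).
case: (boolP (Lv 1 m)) => c1m.
  rewrite (m12 c1m) /=; left; split => //.
case: (boolP (Lv 2 n)) => c2n; case: (boolP (Lv 2 m)) => c2m /=.
- by left.
- by case: hxn => [[_ ->]|->]; [left | right].
- by case: hxn => [[-> _]|->]; [left | right].
- exact: hxn.
Qed.

Lemma w_bd d (A0 A1 B : finType) (x : point d -> alph A0 A1 B) a0 p b n :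
  boundary_pt (Fbox d) n -> x n = wcfg x a0 p b n.
Proof.
move=> [nF nint]; case: (boolP (Lv 2 n)) => h2.
  exfalso; apply: nint; split => // k hk; apply: Fbox_in.
  move/forallP: h2 => h2; apply/forallP => j; have := h2 j; have := hk j; lia.
have h1 : Lv 1 n = false by apply/negbTE/negP => /Lv_mono h; case/negP: h2; exact: h.
have h0 : Lv 0 n = false by apply/negbTE/negP => /Lv_mono /Lv_mono h; case/negP: h2; exact: h.
by rewrite /wcfg h0 h1 (negbTE h2).
Qed.

Lemma w_agree d (A0 A1 B : finType) (x : point d -> alph A0 A1 B) a0 p q b k :
  ~~ Lv 0 k -> wcfg x a0 q b k = wcfg x a0 p b k.
Proof. by move=> h; rewrite /wcfg (negbTE h). Qed.

Lemma w_at0 d (A0 A1 B : finType) (x : point d -> alph A0 A1 B) a0 p b :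
  wcfg x a0 p b 0 = p.
Proof. by rewrite /wcfg Lv_zero. Qed.

Lemma psi_center d (S : finType) (x y : point d -> S) :
  (forall k, ~~ Lv 0 k -> x k = y k) ->
  PsiD (Fbox d) x y = sharp (y 0) - sharp (x 0).
Proof.
move=> h; rewrite /PsiD (big_fsetD1 0) /=; last by apply: Fbox_in; apply: Lv_zero.
rewrite big1_seq ?addr0 // => j /andP [_]; rewrite in_fsetD1 => /andP [hj _].
rewrite h ?subrr //; apply/negP => /Lv0 hj0; by rewrite hj0 eqxx in hj.
Qed.

Lemma PsiD_sub d (S : finType) (D : {fset point d}) (x y z : point d -> S) :
  PsiD D x y - PsiD D x z = PsiD D z y.
Proof.
rewrite /PsiD -sumrB; apply: eq_bigr => j _.
by rewrite opprB addrA subrK.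
Qed.

Lemma w_diff d (A0 A1 B : finType) (x : point d -> alph A0 A1 B) a0 p q b :
  PsiD (Fbox d) (wcfg x a0 q b) (wcfg x a0 p b) = sharp p - sharp q.
Proof.
rewrite psi_center ?w_at0 // => k hk; exact: w_agree.
Qed.

Lemma key_diff (A0 A1 B : finType) (a0 : A0) (P : {ffun alph A0 A1 B -> int} -> Prop) :
  (forall p q b, valid p b -> valid q b -> gen_subgroup P (sharp p - sharp q)) ->
  forall p q, gen_subgroup P (sharp p - sharp q).
Proof.
move=> h p q.
set m : alph A0 A1 B := (inl a0, p.2).
have -> : sharp p - sharp q = (sharp p - sharp m) + (sharp m - sharp q).
  by rewrite addrA subrK.
apply: genD.
  by apply: (h _ _ p.2); rewrite /valid ?eqxx ?orbT.
by apply: (h _ _ q.2); rewrite /valid ?eqxx ?orbT.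
Qed.

Local Open Scope fset_scope.

Theorem proposition3p3 (d : nat) (A0 A1 B : finType) (hA0 : (0 < #|A0|)%N) :
  exists F : {fset point d},
    forall x : point d -> alph A0 A1 B, in_beach x ->
      forall v : {ffun alph A0 A1 B -> int},
        gen_subgroup (fun w => exists y : point d -> alph A0 A1 B,
                         in_beach y /\ (forall n, boundary_pt F n -> x n = y n) /\
                         w = PsiD F x y) v
        <-> gen_subgroup (@H_gens d A0 A1 B) v.
Proof.
case/card_gt0P: hA0 => a0 _; exists (Fbox d) => x hx v; split => hv.
  apply: tot_gen; last first.
    by apply: (@gen_tot _ _ v _ hv) => w [y [_ [_ ->]]]; apply: tot_PsiD.
  apply: (@key_diff _ _ _ a0) => p q b hp hq.
  apply: gen1.
  pose c : point d -> alph A0 A1 B := fun _ => (inl a0, b).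
  have hc : in_beach c by move=> n i; right.
  exists (wcfg c a0 q b), (wcfg c a0 p b), (Fbox d); split; first exact: w_beach.
  split; first exact: w_beach.
  split; last by rewrite w_diff.
  move=> n hn; apply: w_agree; apply/negP => /Lv_mono /Lv_mono /Lv_mono h3.
  by rewrite Fbox_in in hn.
apply: tot_gen; last first.
  by apply: (@gen_tot _ _ v _ hv) => w [x' [y' [D [_ [_ [_ ->]]]]]]; apply: tot_PsiD.
apply: (@key_diff _ _ _ a0) => p q b hp hq.
rewrite -(@w_diff _ _ _ _ x a0 p q b) -(@PsiD_sub _ _ _ x).
apply: genB; apply: gen1.
  by exists (wcfg x a0 p b); split; [exact: w_beach | split => //; exact: w_bd].
by exists (wcfg x a0 q b); split; [exact: w_beach | split => //; exact: w_bd].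
Qed.
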